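(* Let $t$ be a deterministic process term of the process algebra $P_{\mathrm{PA}}$ (described in the context) and let $\sigma_1,\sigma_2$ be closed substitutions such that $\mathbf d(\sigma_1(x),\sigma_2(x))<1$ for every state variable $x$. Then \[ \mathbf d(\sigma_1(t),\sigma_2(t)) \le \mathrm{dda}\bigl(\llbracket t\rrbracket_{\mathcal M},\mathbf d(\sigma_1,\sigma_2)\bigr). \]
   Context: Probabilistic transition systems and bisimilarity metric. A signature $\Sigma$ is a countable set of operators $f$, each with an arity $r(f)\in\mathbb N$. Fix disjoint countably infinite sets $\mathcal V_s$ of state variables and $\mathcal V_d$ of distribution variables; $\mathcal V=\mathcal V_s\cup\mathcal V_d$. Open (state) terms are built from state variables and operators; closed terms (processes) $T(\Sigma)$ contain no variables. $\Delta(T(\Sigma))$ is the set of discrete probability distributions on $T(\Sigma)$, $\delta_t$ is the Dirac distribution at $t$, and for distributions $\pi_1,\dots,\pi_{r(f)}$, $f(\pi_1,\dots,\pi_{r(f)})$ is the distribution assigning $f(t_1,\dots,t_{r(f)})$ probability $\prod_i\pi_i(t_i)$. Distribution terms are: distribution variables $\mu$, $\delta(t)$ for state terms $t$, convex combinations $\sum_{i\in I}q_i\theta_i$ ($q_i\in(0,1]$, $\sum q_i=1$), and $f(\theta_1,\dots,\theta_{r(f)})$. A closed substitution $\sigma$ maps state variables to closed terms and distribution variables to distributions; it extends homomorphically to state terms and to distribution terms via $\sigma(\delta(t))=\delta_{\sigma(t)}$, $\sigma(\sum q_i\theta_i)=\sum q_i\sigma(\theta_i)$, $\sigma(f(\theta_1,\dots))=f(\sigma(\theta_1),\dots)$.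 A PTS is $(T(\Sigma),A,\to)$ with $A$ a countable set of actions and $\to\subseteq T(\Sigma)\times A\times\Delta(T(\Sigma))$; write $t\xrightarrow{a}\pi$, and $\mathit{der}(t,a)=\{\pi\mid t\xrightarrow a\pi\}$. A PGSOS rule has the form $\dfrac{\{x_i\xrightarrow{a_{i,m}}\mu_{i,m}\mid i\in I,m\in M_i\}\ \ \{x_i\not\xrightarrow{b_{i,n}}\mid i\in I,n\in N_i\}}{f(x_1,\dots,x_{r(f)})\xrightarrow{a}\theta}$ with $I=\{1,\dots,r(f)\}$, finite $M_i,N_i$, pairwise distinct $x_i\in\mathcal V_s$, pairwise distinct $\mu_{i,m}\in\mathcal V_d$, and $\theta$ a distribution term whose variables are among the $x_i$ and $\mu_{i,m}$. A PTSS $(\Sigma,A,R)$ with $R$ a countable set of PGSOS rules determines a unique supported model: $t\xrightarrow a\pi$ iff for some rule and closed substitution $\sigma$, $\sigma(x_i)\xrightarrow{a_{i,m}}\sigma(\mu_{i,m})$ for all positive premises, $\sigma(x_i)$ has no $b_{i,n}$-transition for all negative premises, $\sigma(f(x_1,\dots))=t$ and $\sigma(\theta)=\pi$. For $d:T(\Sigma)\times T(\Sigma)\to[0,1]$, the Kantorovich lifting is $K(d)(\pi,\pi')=\min_{\omega}\sum_{t,t'}d(t,t')\omega(t,t')$ over couplings $\omega$ of $\pi,\pi'$; the Hausdorff lifting is $H(\hat d)(\Pi_1,\Pi_2)=\max\{\sup_{\pi_1\in\Pi_1}\inf_{\pi_2\in\Pi_2}\hat d(\pi_1,\pi_2),\sup_{\pi_2\in\Pi_2}\inf_{\pi_1\in\Pi_1}\hat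 d(\pi_2,\pi_1)\}$ with $\inf\emptyset=1$, $\sup\emptyset=0$. Let $B(d)(t,t')=\sup_{a\in A}H(K(d))(\mathit{der}(t,a),\mathit{der}(t',a))$. The bisimilarity metric $\mathbf d$ is the least fixed point of $B$ on $[0,1]^{T(\Sigma)\times T(\Sigma)}$ ordered pointwise (equivalently the least 1-bounded pseudometric $d$ such that whenever $d(t,t')<1$ and $t\xrightarrow a\pi$ there is $t'\xrightarrow a\pi'$ with $K(d)(\pi,\pi')\le d(t,t')$). The process algebra $P_{\mathrm{PA}}$: operators are the constant $0$, for each $a\in A$, $n\ge1$, $q_1,\dots,q_n\in(0,1]$ with $\sum q_i=1$ the $n$-ary prefix $a.\bigoplus_{i=1}^n[q_i]\_$ (written $a.\_$ when $n=1$), binary $+$, and binary $\|_B$ for each $B\subseteq A$ ($\|$ denotes $\|_A$). Rules: $a.\bigoplus_{i}[q_i]x_i\xrightarrow a\sum_i q_i\delta(x_i)$; from $x_1\xrightarrow a\mu_1$ infer $x_1+x_2\xrightarrow a\mu_1$; from $x_2\xrightarrow a\mu_2$ infer $x_1+x_2\xrightarrow a\mu_2$; for $a\in B$ from $x_1\xrightarrow a\mu_1$, $x_2\xrightarrow a\mu_2$ infer $x_1\|_Bx_2\xrightarrow a\mu_1\|_B\mu_2$; for $a\notin B$ from $x_1\xrightarrow a\mu_1$ infer $x_1\|_Bx_2\xrightarrow a\mu_1\|_B\delta(x_2)$ and from $x_2\xrightarrow a\mu_2$ infer $x_1\|_Bx_2\xrightarrow a\delta(x_1)\|_B\mu_2$.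 Deterministic process terms are the open terms built only from $0$, state variables, $a.\_$ and $\|$. Multiplicities: $\mathcal M$ is the set of maps $m:\mathcal V\to\mathbb N\cup\{\infty\}$; $0$ is the zero map and $n_V$ ($V\subseteq\mathcal V$) maps $x\in V$ to $n$ and other variables to $0$; $1_x=1_{\{x\}}$. For deterministic terms: $\llbracket0\rrbracket_{\mathcal M}=0$, $\llbracket x\rrbracket_{\mathcal M}=1_x$, $\llbracket t_1\|t_2\rrbracket_{\mathcal M}(x)=\llbracket t_1\rrbracket_{\mathcal M}(x)+\llbracket t_2\rrbracket_{\mathcal M}(x)$, $\llbracket a.t\rrbracket_{\mathcal M}=\llbracket t\rrbracket_{\mathcal M}$. $\mathcal E$ is the set of maps $e:\mathcal V\to[0,1)$. $\mathrm{dda}(m,e)=1-\prod_{x\in\mathcal V}(1-e(x))^{m(x)}$ (with $c^\infty=0$ for $0\le c<1$ and $1^\infty=1$). For closed substitutions, $\mathbf d(\sigma_1,\sigma_2)\in\mathcal E$ is $x\mapsto\mathbf d(\sigma_1(x),\sigma_2(x))$. *)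

(* Defs.v *)
From Stdlib Require Fin.
From Stdlib Require Import Reals Lra List.
From Stdlib Require Import ClassicalDescription.
Import ListNotations.
Open Scope R_scope.

Fixpoint fin_sum (n : nat) : (Fin.t n -> R) -> R :=
  match n with
  | O => fun _ => 0
  | S m => fun f => f Fin.F1 + fin_sum m (fun i => f (Fin.FS i))
  end.

Set Implicit Arguments.

Definition wf_weights (n : nat) (q : Fin.t (S n) -> R) : Prop :=
  (forall i, 0 < q i <= 1) /\ fin_sum (S n) q = 1.

Lemma wf_weights_one : @wf_weights 0 (fun _ => 1).
Proof. split; [intros; lra | simpl; lra]. Qed.

(* ---------- closed terms T(Sigma) of P_PA over action type A ----------
   Pref a n q Hq p  =  a.(+)_{i=1}^{n+1} [q_i] p_i
   Plus p1 p2       =  p1 + p2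
   Par B p1 p2      =  p1 ||_B p2   (B a subset of A)                     *)
Inductive proc (A : Type) : Type :=
| Nil : proc A
| Pref : A -> forall (n : nat) (q : Fin.t (S n) -> R),
           @wf_weights n q -> (Fin.t (S n) -> proc A) -> proc A
| Plus : proc A -> proc A -> proc A
| Par : (A -> Prop) -> proc A -> proc A -> proc A.
Arguments Nil {A}.

Definition dist (A : Type) := proc A -> R.

Definition dirac (A : Type) (t : proc A) : dist A :=
  fun u => if excluded_middle_informative (u = t) then 1 else 0.

Definition pref_dist (A : Type) (n : nat) (q : Fin.t (S n) -> R)
  (p : Fin.t (S n) -> proc A) : dist A :=
  fun u => fin_sum (S n) (fun i => q i * dirac (p i) u).

Definition par_dist (A : Type) (B : A -> Prop) (pi1 pi2 : dist A) : dist A :=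
  fun u => match u with
           | Par B' u1 u2 =>
               if excluded_middle_informative (B' = B) then pi1 u1 * pi2 u2 else 0
           | _ => 0
           end.

(* ---------- the PTS induced by the PGSOS rules of P_PA ----------
   (all rules are positive, so the unique supported model is the
    inductively generated transition relation) *)
Inductive step (A : Type) : proc A -> A -> dist A -> Prop :=
| st_pref : forall a (n : nat) (q : Fin.t (S n) -> R) (Hq : @wf_weights n q) (p : Fin.t (S n) -> proc A), step (Pref a Hq p) a (pref_dist q p)
| st_plusL : forall x1 x2 a mu, step x1 a mu -> step (Plus x1 x2) a mu
| st_plusR : forall x1 x2 a mu, step x2 a mu -> step (Plus x1 x2) a mu
| st_sync : forall (B : A -> Prop) x1 x2 a mu1 mu2,
    B a -> step x1 a mu1 -> step x2 a mu2 ->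
    step (Par B x1 x2) a (par_dist B mu1 mu2)
| st_parL : forall (B : A -> Prop) x1 x2 a mu1,
    ~ B a -> step x1 a mu1 -> step (Par B x1 x2) a (par_dist B mu1 (dirac x2))
| st_parR : forall (B : A -> Prop) x1 x2 a mu2,
    ~ B a -> step x2 a mu2 -> step (Par B x1 x2) a (par_dist B (dirac x1) mu2).

Definition der (A : Type) (t : proc A) (a : A) : dist A -> Prop := step t a.

Definition lsum (X : Type) (s : list X) (f : X -> R) : R :=
  fold_right (fun x acc => f x + acc) 0 s.

(* ---------- Kantorovich lifting ----------
   A coupling of pi and pi' is a (finitely supported) omega with marginals
   pi and pi'; s1, s2 are duplicate-free lists containing its support.     *)
Definition coupling (A : Type) (pi pi' : dist A) (s1 s2 : list (proc A))
  (omega : proc A -> proc A -> R) : Prop :=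
  NoDup s1 /\ NoDup s2 /\
  (forall t t', 0 <= omega t t') /\
  (forall t t', ~ (In t s1 /\ In t' s2) -> omega t t' = 0) /\
  (forall t, In t s1 -> lsum s2 (omega t) = pi t) /\
  (forall t, ~ In t s1 -> pi t = 0) /\
  (forall t', In t' s2 -> lsum s1 (fun t => omega t t') = pi' t') /\
  (forall t', ~ In t' s2 -> pi' t' = 0).

Definition coupling_cost (A : Type) (d : proc A -> proc A -> R)
  (s1 s2 : list (proc A)) (omega : proc A -> proc A -> R) : R :=
  lsum s1 (fun t => lsum s2 (fun t' => d t t' * omega t t')).

Definition Kant (A : Type) (d : proc A -> proc A -> R) (pi pi' : dist A) (v : R) : Prop :=
  (exists s1 s2 omega, coupling pi pi' s1 s2 omega /\ coupling_cost d s1 s2 omega = v) /\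
  (forall s1 s2 omega, coupling pi pi' s1 s2 omega -> v <= coupling_cost d s1 s2 omega).

(* ---------- sup / inf with sup(empty) = 0, inf(empty) = 1 ---------- *)
Definition is_glb (S : R -> Prop) (v : R) : Prop :=
  (forall c, S c -> v <= c) /\ (forall b, (forall c, S c -> b <= c) -> b <= v).

Definition is_sup (S : R -> Prop) (v : R) : Prop :=
  ((~ exists c, S c) /\ v = 0) \/ ((exists c, S c) /\ is_lub S v).

Definition is_inf (S : R -> Prop) (v : R) : Prop :=
  ((~ exists c, S c) /\ v = 1) \/ ((exists c, S c) /\ is_glb S v).

Definition Haus (A : Type) (d : proc A -> proc A -> R) (P1 P2 : dist A -> Prop) (v : R) : Prop :=
  exists v1 v2,
    is_sup (fun c => exists pi1, P1 pi1 /\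
              is_inf (fun k => exists pi2, P2 pi2 /\ Kant d pi1 pi2 k) c) v1 /\
    is_sup (fun c => exists pi2, P2 pi2 /\
              is_inf (fun k => exists pi1, P1 pi1 /\ Kant d pi2 pi1 k) c) v2 /\
    v = Rmax v1 v2.

Definition Bfun (A : Type) (d : proc A -> proc A -> R) (t t' : proc A) (v : R) : Prop :=
  is_sup (fun c => exists a : A, Haus d (der t a) (der t' a) c) v.

Definition bounded01 (A : Type) (d : proc A -> proc A -> R) : Prop :=
  forall t t', 0 <= d t t' <= 1.

Definition is_B_fixpoint (A : Type) (d : proc A -> proc A -> R) : Prop :=
  forall t t', Bfun d t t' (d t t').

Definition is_bisim_metric (A : Type) (d : proc A -> proc A -> R) : Prop :=
  bounded01 d /\ is_B_fixpoint d /\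
  (forall d', bounded01 d' -> is_B_fixpoint d' -> forall t t', d t t' <= d' t t').

(* ---------- deterministic open process terms ----------
   built from 0, state variables (indexed by nat), a._ and || (= ||_A) *)
Inductive dterm (A : Type) : Type :=
| DVar : nat -> dterm A
| DNil : dterm A
| DPref : A -> dterm A -> dterm A
| DPar : dterm A -> dterm A -> dterm A.

Fixpoint dsubst (A : Type) (sigma : nat -> proc A) (t : dterm A) : proc A :=
  match t with
  | DVar _ x => sigma x
  | DNil _ => Nil
  | DPref a t1 => Pref a wf_weights_one (fun _ => dsubst sigma t1)
  | DPar t1 t2 => Par (fun _ : A => True) (dsubst sigma t1) (dsubst sigma t2)
  end.

(* [[t]]_M restricted to state variables (it is 0 on distribution
   variables, and finite-valued for deterministic terms) *)
Fixpoint mult (A : Type) (t : dterm A) : nat -> nat :=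
  match t with
  | DVar _ x => fun y => if Nat.eqb x y then 1%nat else 0%nat
  | DNil _ => fun _ => 0%nat
  | DPref _ t1 => mult t1
  | DPar t1 t2 => fun y => (mult t1 y + mult t2 y)%nat
  end.

Fixpoint vbound (A : Type) (t : dterm A) : nat :=
  match t with
  | DVar _ x => S x
  | DNil _ => 0%nat
  | DPref _ t1 => vbound t1
  | DPar t1 t2 => Nat.max (vbound t1) (vbound t2)
  end.

Fixpoint prod_upto (n : nat) (f : nat -> R) : R :=
  match n with
  | O => 1
  | S k => prod_upto k f * f k
  end.

(* dda(m,e) = 1 - prod_x (1 - e x)^(m x), for m supported on {0..n-1}
   (all other factors are (1 - e x)^0 = 1) *)
Definition dda (m : nat -> nat) (n : nat) (e : nat -> R) : R :=
  1 - prod_upto n (fun x => (1 - e x) ^ (m x)).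

(* Main.v *)
Require Import Defs.
From Stdlib Require Import Reals Lra Lia List Permutation ClassicalDescription Classical FinFun Eqdep_dec FunctionalExtensionality.
From Stdlib Require ClassicalEpsilon.
Require Import Defs.
Import ListNotations.
Open Scope R_scope.


Definition pdec {X : Type} (x y : X) : {x = y} + {x <> y} :=
  excluded_middle_informative (x = y).

Section Lsum.
Context {X : Type}.
Implicit Types (s : list X) (f g : X -> R).

Lemma lsum_nil f : lsum [] f = 0. Proof. reflexivity. Qed.
Lemma lsum_cons a s f : lsum (a :: s) f = f a + lsum s f. Proof. reflexivity. Qed.

Lemma lsum_app s1 s2 f : lsum (s1 ++ s2) f = lsum s1 f + lsum s2 f.
Proof. induction s1 as [|a s IH]; cbn [app]; rewrite ?lsum_cons, ?lsum_nil, ?IH; ring. Qed.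

Lemma lsum_ext s f g : (forall x, In x s -> f x = g x) -> lsum s f = lsum s g.
Proof. induction s as [|a s IH]; intros H; [reflexivity|]. rewrite !lsum_cons, H, IH; auto.
  intros; apply H; right; auto. left; auto. Qed.

Lemma lsum_plus s f g : lsum s (fun x => f x + g x) = lsum s f + lsum s g.
Proof. induction s as [|a s IH]; rewrite ?lsum_cons, ?lsum_nil, ?IH; ring. Qed.

Lemma lsum_minus s f g : lsum s (fun x => f x - g x) = lsum s f - lsum s g.
Proof. induction s as [|a s IH]; rewrite ?lsum_cons, ?lsum_nil, ?IH; ring. Qed.

Lemma lsum_scal_l s c f : lsum s (fun x => c * f x) = c * lsum s f.
Proof. induction s as [|a s IH]; rewrite ?lsum_cons, ?lsum_nil, ?IH; ring. Qed.

Lemma lsum_scal_r s c f : lsum s (fun x => f x * c) = lsum s f * c.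
Proof. induction s as [|a s IH]; rewrite ?lsum_cons, ?lsum_nil, ?IH; ring. Qed.

Lemma lsum_zero s f : (forall x, In x s -> f x = 0) -> lsum s f = 0.
Proof. induction s as [|a s IH]; intros H; [reflexivity|]. rewrite lsum_cons, H, IH; [ring| |left; auto].
  intros; apply H; right; auto. Qed.

Lemma lsum_le s f g : (forall x, In x s -> f x <= g x) -> lsum s f <= lsum s g.
Proof. induction s as [|a s IH]; intros H; rewrite ?lsum_cons, ?lsum_nil; [lra|].
  assert (f a <= g a) by (apply H; left; auto).
  assert (lsum s f <= lsum s g) by (apply IH; intros; apply H; right; auto). lra. Qed.

Lemma lsum_nonneg s f : (forall x, In x s -> 0 <= f x) -> 0 <= lsum s f.
Proof. intros H. rewrite <- (lsum_zero s (fun _ => 0)) by auto. apply lsum_le; auto. Qed.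

Lemma lsum_nonneg_zero s f : (forall x, In x s -> 0 <= f x) -> lsum s f = 0 ->
  forall x, In x s -> f x = 0.
Proof. induction s as [|a s IH]; intros H Hs x Hx; [destruct Hx|]. rewrite lsum_cons in Hs.
  assert (0 <= f a) by (apply H; left; auto).
  assert (0 <= lsum s f) by (apply lsum_nonneg; intros; apply H; right; auto).
  destruct Hx as [<-|Hx]; [lra|]. apply IH; auto; [intros; apply H; right; auto| lra]. Qed.

Lemma lsum_perm s s' f : Permutation s s' -> lsum s f = lsum s' f.
Proof. induction 1; rewrite ?lsum_cons; try lra. Qed.

Definition nzb f (x : X) : bool := if Req_EM_T (f x) 0 then false else true.

Lemma lsum_filter s f : lsum s f = lsum (filter (nzb f) s) f.
Proof. induction s as [|a s IH]; [reflexivity|]. cbn [filter]. unfold nzb at 1.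
  destruct (Req_EM_T (f a) 0) as [e|e]; rewrite ?lsum_cons, IH; [rewrite e; ring| reflexivity]. Qed.

Lemma lsum_inv s s' f : NoDup s -> NoDup s' ->
  (forall x, f x <> 0 -> In x s /\ In x s') -> lsum s f = lsum s' f.
Proof. intros H1 H2 H. rewrite (lsum_filter s), (lsum_filter s'). apply lsum_perm.
  apply NoDup_Permutation; try apply NoDup_filter; auto.
  intros x; rewrite !filter_In; unfold nzb; destruct (Req_EM_T (f x) 0) as [e|e].
  - split; intros [_ F]; discriminate F.
  - specialize (H x e); tauto. Qed.

End Lsum.

Lemma lsum_map {X Y : Type} (h : X -> Y) s (f : Y -> R) : lsum (map h s) f = lsum s (fun x => f (h x)).
Proof. induction s as [|a s IH]; [reflexivity|]. cbn [map]. rewrite !lsum_cons, IH; reflexivity. Qed.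

Lemma lsum_prod {X Y : Type} (s1 : list X) (s2 : list Y) f :
  lsum (list_prod s1 s2) f = lsum s1 (fun x => lsum s2 (fun y => f (x, y))).
Proof. induction s1 as [|a s IH]; [reflexivity|]. cbn [list_prod].
  rewrite lsum_app, lsum_map, lsum_cons, IH; reflexivity. Qed.

Lemma lsum_comm {X Y : Type} (s1 : list X) (s2 : list Y) (f : X -> Y -> R) :
  lsum s1 (fun x => lsum s2 (fun y => f x y)) = lsum s2 (fun y => lsum s1 (fun x => f x y)).
Proof. induction s1 as [|a s IH]; rewrite ?lsum_cons.
  - rewrite lsum_nil, lsum_zero; reflexivity.
  - rewrite IH, <- lsum_plus. apply lsum_ext; intros; rewrite lsum_cons; reflexivity. Qed.

Lemma NoDup_list_prod {X Y : Type} (s1 : list X) (s2 : list Y) :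
  NoDup s1 -> NoDup s2 -> NoDup (list_prod s1 s2).
Proof. intros H1 H2; induction H1 as [|a s Ha Hs IH]; [constructor|]. cbn [list_prod].
  apply NoDup_app; auto.
  - apply Injective_map_NoDup; auto. intros y y' E; inversion E; auto.
  - intros [x y] Hi Hj. apply in_map_iff in Hi. destruct Hi as [y0 [E _]]. inversion E; subst.
    apply in_prod_iff in Hj. tauto.
Qed.

Lemma lsum_dirac {A : Type} (s : list (proc A)) v : NoDup s -> In v s -> lsum s (dirac v) = 1.
Proof. induction 1 as [|a s Ha Hs IH]; intros Hv; [destruct Hv|]. rewrite lsum_cons. unfold dirac at 1.
  destruct (excluded_middle_informative (a = v)) as [->|n].
  - rewrite lsum_zero; [ring|]. intros x Hx; unfold dirac; destruct (excluded_middle_informative (x = v)); subst; tauto.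
  - destruct Hv as [->|Hv]; [tauto|]. rewrite IH; auto; ring. Qed.

Lemma dirac_nonneg {A : Type} (v u : proc A) : 0 <= dirac v u.
Proof. unfold dirac; destruct excluded_middle_informative; lra. Qed.

Lemma ratio_lemma {I : Type} (l : list I) (x dl : I -> R) :
  (forall i, In i l -> 0 <= x i) -> (exists j, In j l /\ dl j < 0) ->
  exists t, 0 <= t /\ (forall i, In i l -> 0 <= x i + t * dl i) /\
    exists j, In j l /\ dl j < 0 /\ x j + t * dl j = 0.
Proof.
  induction l as [|a l IH]; intros Hx [j [Hj Hd]]; [destruct Hj|].
  assert (Hxa : 0 <= x a) by (apply Hx; left; auto).
  assert (Hxl : forall i, In i l -> 0 <= x i) by (intros; apply Hx; right; auto).
  destruct (classic (exists j, In j l /\ dl j < 0)) as [Hex|Hno].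
  - destruct (IH Hxl Hex) as [t' [Ht' [Hnn [j' [Hj' [Hd' He']]]]]].
    destruct (Rlt_dec (dl a) 0) as [Ha|Ha].
    + set (r := x a / (- dl a)).
      assert (Hr0 : 0 <= r) by (unfold r, Rdiv; apply Rmult_le_pos; [lra| left; apply Rinv_0_lt_compat; lra]).
      assert (Hra : x a + r * dl a = 0) by (unfold r; field; lra).
      destruct (Rle_dec r t') as [Hrt|Hrt].
      * exists r; split; auto; split.
        -- intros i [<-|Hi]; [lra|]. specialize (Hnn i Hi).
           destruct (Rlt_dec (dl i) 0); [nra| specialize (Hxl i Hi); nra].
        -- exists a; split; [left; auto| split; auto].
      * exists t'; split; auto; split.
        -- intros i [<-|Hi]; [nra| auto].
        -- exists j'; split; [right; auto| split; auto].
    + exists t'; split; auto; split.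
      * intros i [<-|Hi]; [nra| auto].
      * exists j'; split; [right; auto| split; auto].
  - assert (Ha : dl a < 0).
    { destruct Hj as [<-|Hj]; auto. exfalso; apply Hno; exists j; auto. }
    set (r := x a / (- dl a)).
    assert (Hr0 : 0 <= r) by (unfold r, Rdiv; apply Rmult_le_pos; [lra| left; apply Rinv_0_lt_compat; lra]).
    assert (Hra : x a + r * dl a = 0) by (unfold r; field; lra).
    exists r; split; auto; split.
    + intros i [<-|Hi]; [lra|]. destruct (Rlt_dec (dl i) 0) as [Hl|Hl].
      * exfalso; apply Hno; exists i; auto.
      * specialize (Hxl i Hi); nra.
    + exists a; split; [left; auto| split; auto].
Qed.

Section LP.
Variables (I : Type) (ix : list I) (c : I -> R) (F : (I -> R) -> Prop).
Hypothesis H0 : forall x, F x -> forall i, 0 <= x i.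
Hypothesis H1 : forall x, F x -> forall i, ~ In i ix -> x i = 0.
Hypothesis H2 : forall x, F x -> lsum ix x = 1.
Hypothesis H3 : forall x y t, F x -> F y -> (forall i, 0 <= x i + t * (y i - x i)) ->
  F (fun i => x i + t * (y i - x i)).

Definition Cst (x : I -> R) := lsum ix (fun i => c i * x i).
Definition FT (T : list I) x := F x /\ forall i, ~ In i T -> x i = 0.
Definition rem (i : I) (T : list I) := remove pdec i T.

Lemma Cst_combo x y t : Cst (fun i => x i + t * (y i - x i)) = Cst x + t * (Cst y - Cst x).
Proof. unfold Cst. rewrite <- lsum_minus, <- lsum_scal_l, <- lsum_plus.
  apply lsum_ext; intros; ring. Qed.

Lemma FT_rem_FT i T x : FT (rem i T) x -> FT T x.
Proof. intros [HF HT]; split; auto. intros j Hj; apply HT. intros Hr; apply in_remove in Hr; tauto. Qed.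

Lemma FT_FT_rem i T x : FT T x -> x i = 0 -> FT (rem i T) x.
Proof. intros [HF HT] Hi; split; auto. intros j Hj. destruct (pdec j i) as [->|n]; auto.
  apply HT; intros HjT; apply Hj; apply in_in_remove; auto. Qed.

Lemma FT_in T x j : FT T x -> x j <> 0 -> In j T.
Proof. intros [_ HT] Hx; destruct (classic (In j T)); auto. exfalso; auto. Qed.

Lemma F_in x j : F x -> x j <> 0 -> In j ix.
Proof. intros HF Hx; destruct (classic (In j ix)); auto. exfalso; apply Hx; auto. Qed.

Lemma move_pos T x y : FT T x -> FT T y -> (exists j, In j ix /\ y j - x j < 0) ->
  exists t, 0 <= t /\ exists j, In j T /\ FT (rem j T) (fun i => x i + t * (y i - x i)).
Proof.
  intros Hx Hy Hj.
  destruct (ratio_lemma ix x (fun i => y i - x i)) as [t [Ht [Hnn [j [Hjix [Hdj Hz]]]]]]; auto.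
  { intros; apply H0; apply Hx. }
  exists t; split; auto. exists j.
  assert (Hall : forall i, 0 <= x i + t * (y i - x i)).
  { intros i; destruct (classic (In i ix)) as [Hi|Hi]; auto.
    rewrite (H1 x (proj1 Hx) i Hi), (H1 y (proj1 Hy) i Hi); lra. }
  split.
  - apply (FT_in T x); auto. assert (0 <= y j) by (apply H0; apply Hy). lra.
  - apply FT_FT_rem; auto. split.
    + apply H3; auto; [apply Hx|apply Hy].
    + intros i Hi. rewrite (proj2 Hx i Hi), (proj2 Hy i Hi); ring.
Qed.

Lemma move_neg T x y : FT T x -> FT T y -> (exists j, In j ix /\ y j - x j > 0) ->
  exists t, t <= 0 /\ exists j, In j T /\ FT (rem j T) (fun i => x i + t * (y i - x i)).
Proof.
  intros Hx Hy Hj.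
  destruct (ratio_lemma ix x (fun i => - (y i - x i))) as [t [Ht [Hnn [j [Hjix [Hdj Hz]]]]]]; auto.
  { intros; apply H0; apply Hx. }
  { destruct Hj as [j [H H']]; exists j; split; auto; lra. }
  exists (- t); split; [lra|]. exists j.
  assert (Hall : forall i, 0 <= x i + - t * (y i - x i)).
  { intros i; destruct (classic (In i ix)) as [Hi|Hi].
    - specialize (Hnn i Hi); lra.
    - rewrite (H1 x (proj1 Hx) i Hi), (H1 y (proj1 Hy) i Hi); lra. }
  split.
  - apply (FT_in T y); auto. assert (0 <= x j) by (apply H0; apply Hx). lra.
  - apply FT_FT_rem; [|nra]. split.
    + apply H3; auto; [apply Hx|apply Hy].
    + intros i Hi. rewrite (proj2 Hx i Hi), (proj2 Hy i Hi); ring.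
Qed.

Lemma sum_diff x y : F x -> F y -> (forall j, In j ix -> 0 <= y j - x j) ->
  forall j, In j ix -> y j = x j.
Proof. intros Hx Hy Hle j Hj.
  assert (E : lsum ix (fun i => y i - x i) = 0) by (rewrite lsum_minus, H2, H2; auto; ring).
  pose proof (lsum_nonneg_zero ix _ Hle E j Hj). lra. Qed.

Lemma best_list k T (IH : forall T', (length T' <= k)%nat -> (exists x, FT T' x) ->
      exists m, FT T' m /\ forall x, FT T' x -> Cst m <= Cst x)
  (HT : (length T <= S k)%nat) :
  forall L, (forall i, In i L -> In i T) -> (exists i, In i L /\ exists x, FT (rem i T) x) ->
  exists m, (exists i, In i L /\ FT (rem i T) m) /\
    forall i, In i L -> forall x, FT (rem i T) x -> Cst m <= Cst x.
Proof.
  assert (Hlen : forall i, In i T -> (length (rem i T) <= k)%nat).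
  { intros i Hi. pose proof (remove_length_lt pdec T i Hi). unfold rem. lia. }
  induction L as [|a L IHL]; intros HL [i [Hi Hx]]; [destruct Hi|].
  destruct (classic (exists x, FT (rem a T) x)) as [Ha|Ha].
  - destruct (IH (rem a T) (Hlen a (HL a (or_introl eq_refl))) Ha) as [ma [Hma Hmin]].
    destruct (classic (exists i, In i L /\ exists x, FT (rem i T) x)) as [HL'|HL'].
    + destruct IHL as [m [[i' [Hi' Hm]] Hmm]]; auto. { intros; apply HL; right; auto. }
      destruct (Rle_dec (Cst ma) (Cst m)) as [Hle|Hle].
      * exists ma; split; [exists a; split; [left|]; auto|].
        intros j [<-|Hj] x Hx'; auto. specialize (Hmm j Hj x Hx'); lra.
      * exists m; split; [exists i'; split; [right|]; auto|].
        intros j [<-|Hj] x Hx'; [specialize (Hmin x Hx'); lra| exact (Hmm j Hj x Hx')].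
    + exists ma; split; [exists a; split; [left|]; auto|].
      intros j [<-|Hj] x Hx'; auto. exfalso; apply HL'; exists j; split; auto; exists x; auto.
  - destruct Hi as [<-|Hi]; [exfalso; apply Ha; auto|].
    destruct IHL as [m [[i' [Hi' Hm]] Hmm]]; auto. { intros; apply HL; right; auto. }
    { exists i; auto. }
    exists m; split; [exists i'; split; [right|]; auto|].
    intros j [<-|Hj] x Hx'; [exfalso; apply Ha; exists x; exact Hx' | exact (Hmm j Hj x Hx')].
Qed.

Lemma lp_main : forall k T, (length T <= k)%nat -> (exists x, FT T x) ->
  exists m, FT T m /\ forall x, FT T x -> Cst m <= Cst x.
Proof.
  induction k as [|k IH]; intros T HT [x0 Hx0].
  - destruct T; [|simpl in HT; lia]. exfalso.
    assert (E : lsum ix x0 = 0) by (apply lsum_zero; intros; apply Hx0; auto).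
    rewrite H2 in E; [lra| apply Hx0].
  - destruct (classic (exists i, In i T /\ exists x, FT (rem i T) x)) as [Hy|Hn].
    + destruct (best_list k T IH HT T (fun i H => H) Hy) as [m [[i0 [Hi0 Hm]] Hmm]].
      exists m; split; [eapply FT_rem_FT; eauto|].
      intros x Hx.
      destruct (classic (exists i, In i T /\ x i = 0)) as [[i [Hi Hxi]]|Hnz].
      * apply (Hmm i Hi); apply FT_FT_rem; auto.
      * destruct (Rle_dec (Cst m) (Cst x)) as [Hle|Hle]; auto. exfalso.
        assert (Hmi0 : m i0 = 0).
        { apply (proj2 Hm). intros Hr; apply in_remove in Hr; tauto. }
        assert (Hxi0 : x i0 <> 0) by (intros E; apply Hnz; exists i0; auto).
        assert (Hxp : 0 <= x i0) by (apply H0; apply Hx).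
        assert (Hmf : FT T m) by (eapply FT_rem_FT; eauto).
        assert (Hpos : exists j, In j ix /\ m j - x j > 0).
        { destruct (classic (exists j, In j ix /\ m j - x j > 0)) as [H|H]; auto. exfalso.
          assert (E : x i0 = m i0).
          { apply (sum_diff m x); [apply Hmf|apply Hx| |].
            - intros j Hj. destruct (Rle_dec 0 (x j - m j)) as [r|r]; auto. exfalso; apply H.
              exists j; split; auto; lra.
            - apply (F_in x); auto; apply Hx. }
          lra. }
        destruct (move_neg T x m Hx Hmf Hpos) as [t [Ht [j [Hj Hz]]]].
        pose proof (Hmm j Hj _ Hz) as Hc. rewrite Cst_combo in Hc.
        assert (t * (Cst m - Cst x) <= 0) by nra. lra.
    + exists x0; split; auto. intros x Hx.
      destruct (classic (exists j, In j ix /\ x j - x0 j < 0)) as [Hneg|Hneg].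
      * exfalso. destruct (move_pos T x0 x Hx0 Hx Hneg) as [t [_ [j [Hj Hz]]]].
        apply Hn; exists j; split; auto; eexists; eauto.
      * assert (forall j, In j ix -> x j = x0 j).
        { apply sum_diff; [apply Hx0|apply Hx|]. intros j Hj.
          destruct (Rle_dec 0 (x j - x0 j)); auto. exfalso; apply Hneg; exists j; split; auto; lra. }
        unfold Cst; right; apply lsum_ext; intros j Hj; rewrite H; auto.
Qed.
End LP.

Lemma lp_exists (I : Type) (ix : list I) (c : I -> R) (F : (I -> R) -> Prop)
  (H0 : forall x, F x -> forall i, 0 <= x i)
  (H1 : forall x, F x -> forall i, ~ In i ix -> x i = 0)
  (H2 : forall x, F x -> lsum ix x = 1)
  (H3 : forall x y t, F x -> F y -> (forall i, 0 <= x i + t * (y i - x i)) ->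
     F (fun i => x i + t * (y i - x i))) :
  (exists x, F x) -> exists m, F m /\ forall x, F x -> Cst I ix c m <= Cst I ix c x.
Proof.
  intros [x0 Hx0].
  destruct (lp_main I ix c F H0 H1 H2 H3 (length ix) ix (le_n _)) as [m [Hm Hmin]].
  { exists x0; split; auto. }
  exists m; split; [apply Hm|]. intros x Hx; apply Hmin; split; auto.
Qed.

Fixpoint flist {X : Type} (n : nat) : (Fin.t n -> X) -> list X :=
  match n with
  | O => fun _ => []
  | S m => fun f => f Fin.F1 :: flist m (fun i => f (Fin.FS i))
  end.

Lemma flist_In {X : Type} n (f : Fin.t n -> X) i : In (f i) (flist n f).
Proof. induction i as [n|n i IH]; simpl; [left; auto| right; apply (IH (fun j => f (Fin.FS j)))]. Qed.

Lemma fin_sum_lsum {X : Type} (s : list X) n (g : Fin.t n -> X -> R) :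
  lsum s (fun u => fin_sum n (fun i => g i u)) = fin_sum n (fun i => lsum s (g i)).
Proof. revert g; induction n as [|n IH]; intros g; simpl.
  - apply lsum_zero; auto.
  - rewrite lsum_plus, (IH (fun i => g (Fin.FS i))); reflexivity. Qed.

Lemma fin_sum_ext n (f g : Fin.t n -> R) : (forall i, f i = g i) -> fin_sum n f = fin_sum n g.
Proof. revert f g; induction n as [|n IH]; intros f g; simpl; intros H; auto. rewrite H, (IH (fun i => f (Fin.FS i)) (fun i => g (Fin.FS i))); auto. Qed.

Lemma fin_sum_nonneg n (f : Fin.t n -> R) : (forall i, 0 <= f i) -> 0 <= fin_sum n f.
Proof. revert f; induction n as [|n IH]; intros f; simpl; intros H; [lra|].
  specialize (IH (fun i => f (Fin.FS i)) (fun i => H (Fin.FS i))). specialize (H Fin.F1). lra. Qed.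

Lemma fin_sum_zero n (f : Fin.t n -> R) : (forall i, f i = 0) -> fin_sum n f = 0.
Proof. revert f; induction n as [|n IH]; intros f; simpl; intros H; auto. rewrite H, (IH (fun i => f (Fin.FS i))); auto; ring. Qed.

Section FSs.
Context {A : Type}.

Definition FSd (pi : dist A) (s : list (proc A)) : Prop :=
  NoDup s /\ (forall u, ~ In u s -> pi u = 0) /\ (forall u, 0 <= pi u) /\ lsum s pi = 1.

Lemma FS_dirac t : FSd (dirac t) [t].
Proof. split; [repeat constructor; auto|split; [|split]].
  - intros u Hu; unfold dirac; destruct excluded_middle_informative; subst; [exfalso; apply Hu; left|]; auto.
  - intros; apply dirac_nonneg.
  - apply lsum_dirac; [repeat constructor; auto| left; auto]. Qed.

Lemma FS_pref n (q : Fin.t (S n) -> R) (Hq : wf_weights q) (p : Fin.t (S n) -> proc A) :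
  FSd (pref_dist q p) (nodup pdec (flist (S n) p)).
Proof.
  destruct Hq as [Hq Hs].
  split; [apply NoDup_nodup|split; [|split]].
  - intros u Hu; unfold pref_dist. apply fin_sum_zero; intros i.
    unfold dirac; destruct excluded_middle_informative as [e|e]; [|ring].
    exfalso; apply Hu; apply nodup_In; subst; apply flist_In.
  - intros u; unfold pref_dist; apply fin_sum_nonneg; intros i.
    specialize (Hq i); pose proof (dirac_nonneg (p i) u); nra.
  - unfold pref_dist. rewrite (fin_sum_lsum _ (S n) (fun i u => q i * dirac (p i) u)).
    rewrite <- Hs. apply fin_sum_ext; intros i. rewrite lsum_scal_l, lsum_dirac; [ring|apply NoDup_nodup|].
    apply nodup_In, flist_In.
Qed.

Definition parl (B : A -> Prop) (s1 s2 : list (proc A)) : list (proc A) :=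
  map (fun pr => Par B (fst pr) (snd pr)) (list_prod s1 s2).

Lemma par_dist_Par B (mu1 mu2 : dist A) x y : par_dist B mu1 mu2 (Par B x y) = mu1 x * mu2 y.
Proof. simpl. destruct excluded_middle_informative as [_|n]; auto. exfalso; auto. Qed.

Lemma parl_NoDup B s1 s2 : NoDup s1 -> NoDup s2 -> NoDup (parl B s1 s2).
Proof. intros; apply Injective_map_NoDup; [|apply NoDup_list_prod; auto].
  intros [a b] [c d] E; simpl in E; inversion E; auto. Qed.

Lemma parl_In B s1 s2 x y : In x s1 -> In y s2 -> In (Par B x y) (parl B s1 s2).
Proof. intros; apply in_map_iff; exists (x, y); split; auto; apply in_prod; auto. Qed.

Lemma FS_par B mu1 mu2 s1 s2 : FSd mu1 s1 -> FSd mu2 s2 -> FSd (par_dist B mu1 mu2) (parl B s1 s2).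
Proof.
  intros [N1 [Z1 [P1 S1]]] [N2 [Z2 [P2 S2]]].
  split; [apply parl_NoDup; auto|split; [|split]].
  - intros u Hu; destruct u as [| | |B' u1 u2]; simpl; auto.
    destruct excluded_middle_informative as [e|e]; auto. subst B'.
    destruct (classic (In u1 s1)) as [Hu1|Hu1]; [|rewrite Z1; auto; ring].
    destruct (classic (In u2 s2)) as [Hu2|Hu2]; [|rewrite Z2; auto; ring].
    exfalso; apply Hu; apply parl_In; auto.
  - intros u; destruct u as [| | |B' u1 u2]; simpl; try lra.
    destruct excluded_middle_informative; [|lra]. apply Rmult_le_pos; auto.
  - unfold parl; rewrite lsum_map, lsum_prod.
    rewrite <- S1. apply lsum_ext; intros x _.
    rewrite <- (Rmult_1_r (mu1 x)), <- S2, <- lsum_scal_l. apply lsum_ext; intros y _.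
    apply par_dist_Par.
Qed.

Lemma step_FS t a pi : step t a pi -> exists s, FSd pi s.
Proof.
  induction 1.
  - eexists; apply FS_pref; auto.
  - auto.
  - auto.
  - destruct IHstep1 as [s1 G1], IHstep2 as [s2 G2]; eexists; apply FS_par; eauto.
  - destruct IHstep as [s1 G1]; eexists; apply FS_par; eauto; apply FS_dirac.
  - destruct IHstep as [s1 G1]; eexists; apply FS_par; eauto; apply FS_dirac.
Qed.

Lemma coupling_support pi pi' s1 s2 S1 S2 omega : FSd pi S1 -> FSd pi' S2 ->
  coupling pi pi' s1 s2 omega -> forall t t', omega t t' <> 0 ->
  In t s1 /\ In t' s2 /\ In t S1 /\ In t' S2.
Proof.
  intros F1 F2 [N1 [N2 [Pos [Z [R1 [Z1 [C1 Z2]]]]]]] t t' Hn.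
  assert (Hin : In t s1 /\ In t' s2) by (destruct (classic (In t s1 /\ In t' s2)); auto; exfalso; auto).
  destruct Hin as [Ht Ht']. split; auto; split; auto. split.
  - destruct (classic (In t S1)) as [H|H]; auto. exfalso. apply Hn.
    apply (lsum_nonneg_zero s2 (omega t)); auto. rewrite R1; auto. apply F1; auto.
  - destruct (classic (In t' S2)) as [H|H]; auto. exfalso. apply Hn.
    apply (lsum_nonneg_zero s1 (fun t => omega t t')); auto. rewrite C1; auto. apply F2; auto.
Qed.

Lemma lsum_nz {X : Type} (s : list X) f : lsum s f <> 0 -> exists x, In x s /\ f x <> 0.
Proof. intros H; destruct (classic (exists x, In x s /\ f x <> 0)); auto. exfalso; apply H.
  apply lsum_zero; intros x Hx; destruct (Req_EM_T (f x) 0); auto. exfalso; eauto. Qed.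

Lemma coupling_restrict pi pi' s1 s2 S1 S2 omega : FSd pi S1 -> FSd pi' S2 ->
  coupling pi pi' s1 s2 omega ->
  coupling pi pi' S1 S2 omega /\ forall h, coupling_cost h s1 s2 omega = coupling_cost h S1 S2 omega.
Proof.
  intros F1 F2 Hc. pose proof (coupling_support _ _ _ _ _ _ _ F1 F2 Hc) as Hs.
  destruct Hc as [N1 [N2 [Pos [Z [R1 [Z1 [C1 Z2]]]]]]].
  destruct F1 as [M1 [Y1 [Q1 T1]]], F2 as [M2 [Y2 [Q2 T2]]].
  split.
  - split; auto; split; auto; split; auto; split; [|split; [|split; [|split]]]; auto.
    + intros t t' H. destruct (Req_EM_T (omega t t') 0); auto. exfalso; apply H; apply Hs in n; tauto.
    + intros t Ht. destruct (classic (In t s1)) as [H|H].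
      * rewrite <- R1; auto. symmetry; apply lsum_inv; auto. intros x Hx; apply Hs in Hx; tauto.
      * rewrite Z1; auto. apply lsum_zero; intros x _. destruct (Req_EM_T (omega t x) 0); auto.
        exfalso; apply Hs in n; tauto.
    + intros t Ht. destruct (classic (In t s2)) as [H|H].
      * rewrite <- C1; auto. symmetry; apply lsum_inv; auto. intros x Hx; apply Hs in Hx; tauto.
      * rewrite Z2; auto. apply lsum_zero; intros x _. destruct (Req_EM_T (omega x t) 0); auto.
        exfalso; apply Hs in n; tauto.
  - intros h. unfold coupling_cost.
    rewrite (lsum_ext s1 _ (fun t => lsum S2 (fun t' => h t t' * omega t t'))).
    + apply lsum_inv; auto. intros t Ht. apply lsum_nz in Ht. destruct Ht as [t' [_ Ht']].
      assert (omega t t' <> 0) by (intros E; apply Ht'; rewrite E; ring). apply Hs in H; tauto.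
    + intros t _. apply lsum_inv; auto. intros t' Ht'.
      assert (omega t t' <> 0) by (intros E; apply Ht'; rewrite E; ring). apply Hs in H; tauto.
Qed.

Lemma coupling_mass pi pi' s1 s2 S1 S2 omega : FSd pi S1 -> FSd pi' S2 ->
  coupling pi pi' s1 s2 omega -> lsum s1 (fun t => lsum s2 (omega t)) = 1.
Proof.
  intros F1 F2 Hc. destruct (coupling_restrict _ _ _ _ _ _ _ F1 F2 Hc) as [Hc' Hcost].
  specialize (Hcost (fun _ _ => 1)). unfold coupling_cost in Hcost.
  rewrite (lsum_ext s1 _ (fun t => lsum s2 (fun t' => 1 * omega t t'))).
  2:{ intros; apply lsum_ext; intros; ring. }
  rewrite Hcost. destruct Hc' as [_ [_ [_ [_ [R1 _]]]]].
  rewrite (lsum_ext S1 _ pi); [apply F1|]. intros t Ht. rewrite <- R1; auto.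
  apply lsum_ext; intros; ring.
Qed.

Lemma coupling_cost_nonneg (h : proc A -> proc A -> R) s1 s2 omega (pi pi' : dist A) : (forall t t', 0 <= h t t') ->
  coupling pi pi' s1 s2 omega -> 0 <= coupling_cost h s1 s2 omega.
Proof. intros Hh Hc. apply lsum_nonneg; intros; apply lsum_nonneg; intros.
  apply Rmult_le_pos; auto. apply Hc. Qed.

Lemma prod_coupling pi pi' S1 S2 : FSd pi S1 -> FSd pi' S2 ->
  coupling pi pi' S1 S2 (fun t t' => pi t * pi' t').
Proof.
  intros [M1 [Y1 [Q1 T1]]] [M2 [Y2 [Q2 T2]]].
  split; auto; split; auto; split; [|split; [|split; [|split; [|split]]]]; auto.
  - intros; apply Rmult_le_pos; auto.
  - intros t t' H. destruct (classic (In t S1)); [|rewrite Y1; auto; ring].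
    destruct (classic (In t' S2)); [|rewrite Y2; auto; ring]. tauto.
  - intros t _; rewrite lsum_scal_l, T2; ring.
  - intros t' _; rewrite lsum_scal_r, T1; ring.
Qed.

Lemma Kant_exists (h : proc A -> proc A -> R) pi pi' S1 S2 : FSd pi S1 -> FSd pi' S2 ->
  exists k, Kant h pi pi' k.
Proof.
  intros F1 F2.
  pose (F := fun x : proc A * proc A -> R => coupling pi pi' S1 S2 (fun t t' => x (t, t'))).
  destruct (lp_exists (proc A * proc A) (list_prod S1 S2) (fun p => h (fst p) (snd p)) F)
    as [m [Hm Hmin]].
  - intros x Hx [t t']; apply Hx.
  - intros x Hx [t t'] Hi. apply Hx. rewrite <- in_prod_iff; auto.
  - intros x Hx. rewrite lsum_prod. rewrite (lsum_ext S1 _ pi); [apply F1|].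
    intros t Ht. apply Hx; auto.
  - intros x y t Hx Hy Hnn.
    destruct Hx as [N1 [N2 [Px [Zx [Rx [Z1 [Cx Z2]]]]]]].
    destruct Hy as [_ [_ [Py [Zy [Ry [_ [Cy _]]]]]]].
    split; [exact N1|]; split; [exact N2|]; split; [|split; [|split; [|split; [|split]]]].
    + intros a b; apply (Hnn (a, b)).
    + intros a b H. rewrite Zx, Zy; auto; ring.
    + intros a Ha. rewrite lsum_plus, lsum_scal_l, lsum_minus, Rx, Ry; auto; ring.
    + exact Z1.
    + intros b Hb. rewrite lsum_plus, lsum_scal_l, lsum_minus, Cx, Cy; auto; ring.
    + exact Z2.
  - exists (fun p => pi (fst p) * pi' (snd p)). apply prod_coupling; auto.
  - exists (coupling_cost h S1 S2 (fun t t' => m (t, t'))). split.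
    + exists S1, S2, (fun t t' => m (t, t')); split; auto.
    + intros s1 s2 omega Hc. destruct (coupling_restrict _ _ _ _ _ _ _ F1 F2 Hc) as [Hc' Hcost].
      rewrite Hcost. specialize (Hmin (fun p => omega (fst p) (snd p)) Hc').
      unfold Cst in Hmin. rewrite !lsum_prod in Hmin. exact Hmin.
Qed.

Lemma Kant_bounds (h : proc A -> proc A -> R) pi pi' S1 S2 k : bounded01 h ->
  FSd pi S1 -> FSd pi' S2 -> Kant h pi pi' k -> 0 <= k <= 1.
Proof.
  intros Hh F1 F2 [[s1 [s2 [om [Hc Hk]]]] Hmin]. split.
  - rewrite <- Hk. eapply coupling_cost_nonneg; eauto. intros; apply Hh.
  - eapply Rle_trans; [apply Hmin; apply (prod_coupling _ _ S1 S2); auto|].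
    unfold coupling_cost.
    apply Rle_trans with (lsum S1 (fun t => lsum S2 (fun t' => pi t * pi' t'))).
    + apply lsum_le; intros t Ht; apply lsum_le; intros t' Ht'. destruct (Hh t t').
      pose proof (proj1 (proj2 (proj2 F1)) t). pose proof (proj1 (proj2 (proj2 F2)) t').
      assert (0 <= pi t * pi' t') by (apply Rmult_le_pos; auto). nra.
    + right. rewrite (lsum_ext S1 _ pi); [apply F1|]. intros t _.
      rewrite lsum_scal_l, (proj2 (proj2 (proj2 F2))); ring.
Qed.

Lemma Kant_mono (h1 h2 : proc A -> proc A -> R) pi pi' k1 k2 :
  (forall t t', h1 t t' <= h2 t t') -> Kant h1 pi pi' k1 -> Kant h2 pi pi' k2 -> k1 <= k2.
Proof.
  intros Hle [_ Hmin1] [[s1 [s2 [om [Hc Hk]]]] _]. rewrite <- Hk.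
  eapply Rle_trans; [apply Hmin1; eauto|]. apply lsum_le; intros; apply lsum_le; intros.
  apply Rmult_le_compat_r; [apply Hc|auto].
Qed.

Lemma coupling_T (pi pi' : dist A) s1 s2 omega : coupling pi pi' s1 s2 omega ->
  coupling pi' pi s2 s1 (fun u v => omega v u).
Proof. intros [N1 [N2 [Pos [Z [R1 [Z1 [C1 Z2]]]]]]].
  repeat (split; auto). intros t t' H; apply Z; tauto. Qed.

Lemma cost_T (h : proc A -> proc A -> R) s1 s2 omega : coupling_cost h s1 s2 omega =
  coupling_cost (fun u v => h v u) s2 s1 (fun u v => omega v u).
Proof. unfold coupling_cost. apply lsum_comm. Qed.

Lemma Kant_T (h : proc A -> proc A -> R) (pi pi' : dist A) k : Kant h pi pi' k -> Kant (fun u v => h v u) pi' pi k.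
Proof.
  intros [[s1 [s2 [om [Hc Hk]]]] Hmin]. split.
  - exists s2, s1, (fun u v => om v u); split; [apply coupling_T; auto|]. rewrite <- cost_T; auto.
  - intros s1' s2' om' Hc'. apply coupling_T in Hc'. specialize (Hmin _ _ _ Hc').
    rewrite cost_T in Hmin. exact Hmin.
Qed.

End FSs.

Lemma sup_exists (S : R -> Prop) : (forall c, S c -> c <= 1) -> exists v, is_sup S v.
Proof. intros H. destruct (classic (exists c, S c)) as [He|Hn].
  - destruct (completeness S) as [m Hm]; [exists 1; intros c Hc; auto| auto|].
    exists m; right; auto.
  - exists 0; left; auto. Qed.

Lemma inf_exists (S : R -> Prop) : (forall c, S c -> 0 <= c) -> exists v, is_inf S v.
Proof. intros H. destruct (classic (exists c, S c)) as [[c Hc]|Hn].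
  - destruct (completeness (fun x => S (- x))) as [m [Hm1 Hm2]].
    + exists 0; intros x Hx; specialize (H _ Hx); lra.
    + exists (- c); rewrite Ropp_involutive; auto.
    + exists (- m); right; split; [exists c; auto|split].
      * intros c' Hc'. assert (- c' <= m) by (apply Hm1; rewrite Ropp_involutive; auto). lra.
      * intros b Hb. assert (m <= - b). { apply Hm2; intros x Hx; specialize (Hb _ Hx); lra. } lra.
  - exists 1; left; auto. Qed.

Lemma sup_ub S v c : is_sup S v -> S c -> c <= v.
Proof. intros [[Hn _]|[_ [Hu _]]] Hc; [exfalso; eauto| apply Hu; auto]. Qed.

Lemma sup_le S v b : is_sup S v -> (forall c, S c -> c <= b) -> 0 <= b -> v <= b.
Proof. intros [[_ ->]|[_ [_ Hl]]] Hb H0; [auto| apply Hl; intros c Hc; auto]. Qed.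

Lemma sup_nonneg S v : is_sup S v -> (forall c, S c -> 0 <= c) -> 0 <= v.
Proof. intros [[_ ->]|[[c Hc] [Hu _]]] H; [lra|]. specialize (H c Hc); specialize (Hu c Hc); lra. Qed.

Lemma inf_lb S v c : is_inf S v -> S c -> v <= c.
Proof. intros [[Hn _]|[_ [Hl _]]] Hc; [exfalso; eauto| apply Hl; auto]. Qed.

Lemma inf_ge S v b : is_inf S v -> (forall c, S c -> b <= c) -> b <= 1 -> b <= v.
Proof. intros [[_ ->]|[_ [_ Hg]]] Hb H1; auto. Qed.

Lemma inf_le1 S v : is_inf S v -> (forall c, S c -> c <= 1) -> v <= 1.
Proof. intros [[_ ->]|[[c Hc] [Hl _]]] H; [lra|]. specialize (H c Hc); specialize (Hl c Hc); lra. Qed.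

Lemma inf_approx S v eps : is_inf S v -> v < 1 -> 0 < eps -> exists c, S c /\ c < v + eps.
Proof. intros [[_ ->]|[_ [Hl Hg]]] Hv He; [lra|].
  destruct (classic (exists c, S c /\ c < v + eps)) as [H|H]; auto. exfalso.
  assert (v + eps <= v). { apply Hg; intros c Hc. destruct (Rlt_dec c (v + eps)); [exfalso; eauto|lra]. }
  lra. Qed.

Lemma sup_mono S1 S2 v1 v2 : is_sup S1 v1 -> is_sup S2 v2 ->
  (forall c1, S1 c1 -> exists c2, S2 c2 /\ c1 <= c2) -> (forall c, S2 c -> 0 <= c) -> v1 <= v2.
Proof. intros H1 H2 Hm Hp. apply (sup_le S1); auto; [|eapply sup_nonneg; eauto].
  intros c Hc; destruct (Hm c Hc) as [c2 [Hc2 Hle]]. pose proof (sup_ub _ _ _ H2 Hc2); lra. Qed.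

Lemma inf_mono S1 S2 v1 v2 : is_inf S1 v1 -> is_inf S2 v2 ->
  (forall c2, S2 c2 -> exists c1, S1 c1 /\ c1 <= c2) -> (forall c, S1 c -> c <= 1) -> v1 <= v2.
Proof. intros H1 H2 Hm Hb. apply (inf_ge S2); auto; [|eapply inf_le1; eauto].
  intros c Hc; destruct (Hm c Hc) as [c1 [Hc1 Hle]]. pose proof (inf_lb _ _ _ H1 Hc1); lra. Qed.

Lemma sup_unique S v w : is_sup S v -> is_sup S w -> v = w.
Proof. intros [[Hn ->]|[He Hl]] [[Hn' ->]|[He' Hl']]; auto; try (exfalso; tauto).
  apply Rle_antisym; [apply Hl; apply Hl'| apply Hl'; apply Hl]. Qed.

Section HB.
Context {A : Type}.
Implicit Types (h : proc A -> proc A -> R).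

Definition FSP (P : dist A -> Prop) := forall pi, P pi -> exists s, FSd pi s.

Definition Iset h (pi : dist A) (P2 : dist A -> Prop) := fun k => exists pi2, P2 pi2 /\ Kant h pi pi2 k.
Definition Oset h (P1 P2 : dist A -> Prop) := fun c => exists pi1, P1 pi1 /\ is_inf (Iset h pi1 P2) c.

Lemma Haus_iff h P1 P2 v : Haus h P1 P2 v <->
  exists v1 v2, is_sup (Oset h P1 P2) v1 /\ is_sup (Oset h P2 P1) v2 /\ v = Rmax v1 v2.
Proof. reflexivity. Qed.

Lemma Iset_bounds h pi P2 : bounded01 h -> FSP P2 -> (exists s, FSd pi s) ->
  forall k, Iset h pi P2 k -> 0 <= k <= 1.
Proof. intros Hh HP [s Hs] k [pi2 [Hp Hk]]. destruct (HP _ Hp) as [s2 Hs2].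
  eapply (Kant_bounds h pi pi2 s s2 k); auto. Qed.

Lemma Oset_bounds h P1 P2 : bounded01 h -> FSP P1 -> FSP P2 ->
  forall c, Oset h P1 P2 c -> 0 <= c <= 1.
Proof. intros Hh H1 H2 c [pi1 [Hp Hc]]. pose proof (Iset_bounds h pi1 P2 Hh H2 (H1 _ Hp)) as Hb.
  split; [apply (inf_ge _ _ 0 Hc); [intros; apply Hb; auto| lra]| apply (inf_le1 _ _ Hc); intros; apply Hb; auto]. Qed.

Lemma Haus_exists h P1 P2 : bounded01 h -> FSP P1 -> FSP P2 -> exists v, Haus h P1 P2 v.
Proof. intros Hh H1 H2.
  destruct (sup_exists (Oset h P1 P2)) as [v1 Hv1]; [intros c Hc; apply (Oset_bounds h P1 P2 Hh H1 H2 c Hc)|].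
  destruct (sup_exists (Oset h P2 P1)) as [v2 Hv2]; [intros c Hc; apply (Oset_bounds h P2 P1 Hh H2 H1 c Hc)|].
  exists (Rmax v1 v2); apply Haus_iff; eauto. Qed.

Lemma Haus_bounds h P1 P2 v : bounded01 h -> FSP P1 -> FSP P2 -> Haus h P1 P2 v -> 0 <= v <= 1.
Proof. intros Hh H1 H2 H. apply Haus_iff in H. destruct H as [v1 [v2 [Hv1 [Hv2 ->]]]].
  pose proof (Oset_bounds h P1 P2 Hh H1 H2) as O1. pose proof (Oset_bounds h P2 P1 Hh H2 H1) as O2.
  assert (0 <= v1 <= 1).
  { split; [apply (sup_nonneg _ _ Hv1)|apply (sup_le _ _ 1 Hv1); [|lra]]; intros c Hc; apply (O1 c Hc). }
  assert (0 <= v2 <= 1).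
  { split; [apply (sup_nonneg _ _ Hv2)|apply (sup_le _ _ 1 Hv2); [|lra]]; intros c Hc; apply (O2 c Hc). }
  unfold Rmax; destruct Rle_dec; lra. Qed.

Lemma Haus_swap h P1 P2 v : Haus h P1 P2 v -> Haus h P2 P1 v.
Proof. intros H. apply Haus_iff in H. destruct H as [v1 [v2 [Hv1 [Hv2 ->]]]].
  apply Haus_iff. exists v2, v1; split; auto; split; auto. apply Rmax_comm. Qed.

Lemma Oset_mono h1 h2 P1 P2 v1 v2 : bounded01 h1 -> bounded01 h2 -> FSP P1 -> FSP P2 ->
  (forall t t', h1 t t' <= h2 t t') ->
  is_sup (Oset h1 P1 P2) v1 -> is_sup (Oset h2 P1 P2) v2 -> v1 <= v2.
Proof.
  intros B1 B2 H1 H2 Hle Hv1 Hv2.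
  apply (sup_mono _ _ _ _ Hv1 Hv2); [|intros c Hc; apply (Oset_bounds h2 P1 P2 B2 H1 H2 c Hc)].
  intros c1 [pi1 [Hp Hc1]]. destruct (H1 _ Hp) as [s Hs].
  pose proof (Iset_bounds h1 pi1 P2 B1 H2 (ex_intro _ s Hs)) as I1.
  pose proof (Iset_bounds h2 pi1 P2 B2 H2 (ex_intro _ s Hs)) as I2.
  destruct (inf_exists (Iset h2 pi1 P2)) as [c2 Hc2]; [intros c Hc; apply (I2 c Hc)|].
  exists c2; split; [exists pi1; auto|].
  apply (inf_mono _ _ _ _ Hc1 Hc2); [|intros c Hc; apply (I1 c Hc)].
  intros k2 [pi2 [Hp2 Hk2]]. destruct (H2 _ Hp2) as [s2 Hs2].
  destruct (Kant_exists h1 pi1 pi2 s s2 Hs Hs2) as [k1 Hk1].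
  exists k1; split; [exists pi2; auto| eapply Kant_mono; eauto].
Qed.

Lemma Haus_mono h1 h2 P1 P2 v1 v2 : bounded01 h1 -> bounded01 h2 -> FSP P1 -> FSP P2 ->
  (forall t t', h1 t t' <= h2 t t') -> Haus h1 P1 P2 v1 -> Haus h2 P1 P2 v2 -> v1 <= v2.
Proof.
  intros B1 B2 H1 H2 Hle Hv1 Hv2. apply Haus_iff in Hv1, Hv2.
  destruct Hv1 as [a1 [b1 [Ha1 [Hb1 ->]]]], Hv2 as [a2 [b2 [Ha2 [Hb2 ->]]]].
  pose proof (Oset_mono h1 h2 P1 P2 a1 a2 B1 B2 H1 H2 Hle Ha1 Ha2).
  pose proof (Oset_mono h1 h2 P2 P1 b1 b2 B1 B2 H2 H1 Hle Hb1 Hb2).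
  unfold Rmax; repeat destruct Rle_dec; lra.
Qed.

Definition Bset h t t' := fun c => exists a : A, Haus h (der t a) (der t' a) c.

Lemma der_FSP t a : FSP (der t a).
Proof. intros pi H; eapply step_FS; eauto. Qed.

Lemma Bfun_exists h t t' : bounded01 h -> exists v, Bfun h t t' v.
Proof. intros Hh. apply sup_exists. intros c [a Ha].
  apply (Haus_bounds h _ _ c Hh (der_FSP t a) (der_FSP t' a) Ha). Qed.

Lemma Bset_bounds h t t' : bounded01 h -> forall c, Bset h t t' c -> 0 <= c <= 1.
Proof. intros Hh c [a Ha]; apply (Haus_bounds h _ _ c Hh (der_FSP t a) (der_FSP t' a) Ha). Qed.

Lemma Bfun_bounds h t t' v : bounded01 h -> Bfun h t t' v -> 0 <= v <= 1.
Proof. intros Hh H. pose proof (Bset_bounds h t t' Hh) as HB.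
  split; [apply (sup_nonneg _ _ H)| apply (sup_le _ _ 1 H); [|lra]]; intros c Hc; apply (HB c Hc). Qed.

Lemma Bfun_mono h1 h2 t t' v1 v2 : bounded01 h1 -> bounded01 h2 ->
  (forall t t', h1 t t' <= h2 t t') -> Bfun h1 t t' v1 -> Bfun h2 t t' v2 -> v1 <= v2.
Proof.
  intros B1 B2 Hle H1 H2. apply (sup_mono _ _ _ _ H1 H2); [|intros c Hc; apply (Bset_bounds h2 t t' B2 c Hc)].
  intros c1 [a Ha]. destruct (Haus_exists h2 (der t a) (der t' a)) as [c2 Hc2]; auto; try apply der_FSP.
  exists c2; split; [exists a; auto|]. exact (Haus_mono h1 h2 _ _ c1 c2 B1 B2 (der_FSP t a) (der_FSP t' a) Hle Ha Hc2).
Qed.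

Lemma Bfun_unique h t t' v w : Bfun h t t' v -> Bfun h t t' w -> v = w.
Proof. apply sup_unique. Qed.

Lemma Bfun_swap h t t' v : Bfun h t t' v -> Bfun h t' t v.
Proof.
  unfold Bfun. intros [[Hn Hv]|[He [Hu Hl]]].
  - left; split; auto. intros [c [a Ha]]; apply Hn; exists c, a; apply Haus_swap; auto.
  - right; split; [destruct He as [c [a Ha]]; exists c, a; apply Haus_swap; auto|split].
    + intros c [a Ha]; apply Hu; exists a; apply Haus_swap; auto.
    + intros b Hb; apply Hl; intros c [a Ha]; apply Hb; exists a; apply Haus_swap; auto.
Qed.

Definition prefix h := bounded01 h /\ forall t t' v, Bfun h t t' v -> v <= h t t'.

Lemma park (d : proc A -> proc A -> R) (Hd : is_bisim_metric d) g : prefix g -> forall t t', d t t' <= g t t'.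
Proof.
  intros Hg.
  assert (Hglb : forall t t', exists v, is_glb (fun r => exists h, prefix h /\ r = h t t') v).
  { intros t t'. destruct (inf_exists (fun r => exists h, prefix h /\ r = h t t')) as [v Hv].
    - intros c [h [[Hb _] ->]]; apply Hb.
    - destruct Hv as [[Hn _]|[_ Hv]]; [exfalso; apply Hn; exists (g t t'), g; auto| eauto]. }
  set (f := fun t t' => proj1_sig (ClassicalEpsilon.constructive_indefinite_description _ (Hglb t t'))).
  assert (Hf : forall t t', is_glb (fun r => exists h, prefix h /\ r = h t t') (f t t')).
  { intros; unfold f; apply proj2_sig. }
  assert (Hfg : forall h, prefix h -> forall t t', f t t' <= h t t').
  { intros h Hh t t'; apply (Hf t t'); exists h; auto. }
  assert (Bf : bounded01 f).
  { intros t t'; split.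
    - apply (Hf t t'). intros r [h [[Hb _] ->]]; apply Hb.
    - eapply Rle_trans; [apply Hfg; eauto| apply Hg]. }
  assert (Hle1 : forall t t' w, Bfun f t t' w -> w <= f t t').
  { intros t t' w Hw. apply (Hf t t'). intros r [h [Hh ->]].
    destruct (Bfun_exists h t t' (proj1 Hh)) as [u Hu].
    eapply Rle_trans; [eapply Bfun_mono; [exact Bf|exact (proj1 Hh)|apply Hfg; auto|exact Hw|exact Hu]|].
    apply Hh; auto. }
  assert (HBf : forall t t', exists v, Bfun f t t' v) by (intros; apply Bfun_exists; auto).
  set (f' := fun t t' => proj1_sig (ClassicalEpsilon.constructive_indefinite_description _ (HBf t t'))).
  assert (Hf' : forall t t', Bfun f t t' (f' t t')) by (intros; unfold f'; apply proj2_sig).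
  assert (Pf' : prefix f').
  { split.
    - intros t t'; eapply Bfun_bounds; eauto.
    - intros t t' v Hv. eapply Bfun_mono; [| exact Bf| |exact Hv| apply Hf'].
      + intros a b; eapply Bfun_bounds; eauto.
      + intros a b; apply Hle1; auto. }
  assert (Hfix : is_B_fixpoint f).
  { intros t t'. replace (f t t') with (f' t t'); [apply Hf'|].
    apply Rle_antisym; [apply Hle1; auto| apply Hfg; auto]. }
  intros t t'. destruct Hd as [_ [_ Hl]].
  eapply Rle_trans; [apply Hl; eauto| apply Hfg; auto].
Qed.

Lemma d_sym (d : proc A -> proc A -> R) (Hd : is_bisim_metric d) t t' : d t t' = d t' t.
Proof. destruct Hd as [_ [Hfix _]].
  apply (Bfun_unique d t' t); [apply Bfun_swap|]; apply Hfix. Qed.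

End HB.

Section Proc.
Context {A : Type}.

Lemma step_Nil (a : A) pi : ~ step Nil a pi.
Proof. intros H; inversion H. Qed.

Lemma step_Pref1 (a b : A) (p : proc A) pi :
  step (Pref a wf_weights_one (fun _ => p)) b pi -> b = a /\ pi = dirac p.
Proof.
  intros H; inversion H; subst.
  apply inj_pair2_eq_dec in H3; [|apply Nat.eq_dec]. subst.
  apply inj_pair2_eq_dec in H4; [|apply Nat.eq_dec]. subst.
  split; auto. extensionality u. unfold pref_dist; simpl; ring.
Qed.


Lemma pref1_dirac (p : proc A) : pref_dist (fun _ : Fin.t 1 => 1) (fun _ => p) = dirac p.
Proof. extensionality u. unfold pref_dist; simpl; ring. Qed.

Lemma dirac_same (p : proc A) : dirac p p = 1.
Proof. unfold dirac; destruct excluded_middle_informative as [_|n]; [reflexivity| exfalso; auto]. Qed.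

Definition TT : A -> Prop := fun _ => True.

Lemma step_ParT (a : A) x1 x2 pi : step (Par TT x1 x2) a pi ->
  exists mu1 mu2, pi = par_dist TT mu1 mu2 /\ step x1 a mu1 /\ step x2 a mu2.
Proof. intros H; inversion H; subst; [eauto| |]; match goal with Hn : ~ TT a |- _ => exfalso; apply Hn; exact I end. Qed.

Section Metric.
Variable d : proc A -> proc A -> R.
Hypothesis Hd : is_bisim_metric d.

Lemma d_bnd : bounded01 d. Proof. apply Hd. Qed.
Lemma d_fix : is_B_fixpoint d. Proof. apply Hd. Qed.

Lemma pref_half (a b : A) x y c :
  Oset d (der (Pref a wf_weights_one (fun _ => x)) b) (der (Pref a wf_weights_one (fun _ => y)) b) c ->
  c <= d x y.
Proof.
  intros [pi1 [Hs Hinf]]. apply step_Pref1 in Hs. destruct Hs as [-> ->].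
  destruct (Kant_exists d (dirac x) (dirac y) [x] [y] (FS_dirac x) (FS_dirac y)) as [k Hk].
  eapply Rle_trans; [apply (inf_lb _ _ k Hinf)|].
  - exists (dirac y); split; auto. unfold der. rewrite <- pref1_dirac. constructor.
  - eapply Rle_trans; [apply Hk; apply prod_coupling; apply FS_dirac|].
    unfold coupling_cost. rewrite !lsum_cons, !lsum_nil, !dirac_same. right; ring.
Qed.

Lemma pref_bound (a : A) p q :
  d (Pref a wf_weights_one (fun _ => p)) (Pref a wf_weights_one (fun _ => q)) <= d p q.
Proof.
  pose proof (d_fix (Pref a wf_weights_one (fun _ => p)) (Pref a wf_weights_one (fun _ => q))) as H.
  apply (sup_le _ _ _ H); [|apply d_bnd].
  intros c [b Hb]. apply Haus_iff in Hb. destruct Hb as [v1 [v2 [Hv1 [Hv2 ->]]]].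
  apply Rmax_lub.
  - apply (sup_le _ _ _ Hv1); [|apply d_bnd]. intros c' Hc'. eapply pref_half; eauto.
  - apply (sup_le _ _ _ Hv2); [|apply d_bnd]. intros c' Hc'. rewrite (d_sym d Hd). eapply pref_half; eauto.
Qed.

Lemma nil_bound : d Nil Nil <= 0.
Proof.
  pose proof (d_fix Nil Nil) as H. apply (sup_le _ _ _ H); [|lra].
  intros c [b Hb]. apply Haus_iff in Hb. destruct Hb as [v1 [v2 [Hv1 [Hv2 ->]]]].
  apply Rmax_lub.
  - apply (sup_le _ _ _ Hv1); [|lra]. intros c' [pi [Hs _]]. exfalso; eapply step_Nil; eauto.
  - apply (sup_le _ _ _ Hv2); [|lra]. intros c' [pi [Hs _]]. exfalso; eapply step_Nil; eauto.
Qed.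

Lemma match_step x y (a : A) mu eps : d x y < 1 -> step x a mu -> 0 < eps ->
  exists mu' k, step y a mu' /\ Kant d mu mu' k /\ k < d x y + eps.
Proof.
  intros Hxy Hs He.
  destruct (Haus_exists d (der x a) (der y a) d_bnd (der_FSP x a) (der_FSP y a)) as [c Hc].
  pose proof (sup_ub _ _ c (d_fix x y) (ex_intro _ a Hc)) as Hcd.
  apply Haus_iff in Hc. destruct Hc as [v1 [v2 [Hv1 [Hv2 ->]]]].
  destruct (step_FS _ _ _ Hs) as [s Hfs].
  pose proof (Iset_bounds d mu (der y a) d_bnd (der_FSP y a) (ex_intro _ s Hfs)) as IB.
  destruct (inf_exists (Iset d mu (der y a))) as [i Hi]; [intros k Hk; apply (IB k Hk)|].
  assert (Hiv : i <= v1) by (apply (sup_ub _ _ _ Hv1); exists mu; auto).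
  pose proof (Rmax_l v1 v2).
  destruct (inf_approx _ _ eps Hi) as [k [[mu' [Hmu' Hk]] Hlt]]; [lra|auto|].
  exists mu', k; split; [exact Hmu'| split; [exact Hk| lra]].
Qed.

End Metric.
End Proc.

Section L4.
Context {X : Type}.
Variables (S1 S2 S1' S2' : list X).
Definition L4 (f : X -> X -> X -> X -> R) :=
  lsum S1 (fun a1 => lsum S2 (fun a2 => lsum S1' (fun b1 => lsum S2' (fun b2 => f a1 a2 b1 b2)))).

Lemma L4_minus f g : L4 (fun a1 a2 b1 b2 => f a1 a2 b1 b2 - g a1 a2 b1 b2) = L4 f - L4 g.
Proof. unfold L4. rewrite <- lsum_minus; apply lsum_ext; intros.
  rewrite <- lsum_minus; apply lsum_ext; intros.
  rewrite <- lsum_minus; apply lsum_ext; intros.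
  rewrite <- lsum_minus; apply lsum_ext; intros. reflexivity. Qed.

Lemma L4_le f g : (forall a1 a2 b1 b2, In a1 S1 -> In a2 S2 -> In b1 S1' -> In b2 S2' ->
   f a1 a2 b1 b2 <= g a1 a2 b1 b2) -> L4 f <= L4 g.
Proof. intros H. unfold L4. repeat (apply lsum_le; intros). auto. Qed.

Lemma L4_fact (F G : X -> X -> R) : L4 (fun a1 a2 b1 b2 => F a1 b1 * G a2 b2) =
  lsum S1 (fun a1 => lsum S1' (F a1)) * lsum S2 (fun a2 => lsum S2' (G a2)).
Proof. unfold L4. rewrite <- lsum_scal_r. apply lsum_ext; intros a1 _.
  rewrite <- lsum_scal_l. apply lsum_ext; intros a2 _.
  rewrite <- lsum_scal_r. apply lsum_ext; intros b1 _.
  apply lsum_scal_l. Qed.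
End L4.

Section Par.
Context {A : Type}.
Variable d : proc A -> proc A -> R.
Hypothesis Hd : is_bisim_metric d.

Definition Om (om1 om2 : proc A -> proc A -> R) (u v : proc A) : R :=
  match u, v with
  | Par B x1 x2, Par B' y1 y2 =>
      if excluded_middle_informative (B = TT /\ B' = TT) then om1 x1 y1 * om2 x2 y2 else 0
  | _, _ => 0
  end.

Lemma Om_Par om1 om2 a b c e : Om om1 om2 (Par TT a b) (Par TT c e) = om1 a c * om2 b e.
Proof. simpl. destruct excluded_middle_informative as [_|n]; [reflexivity| exfalso; auto]. Qed.

Lemma in_parl (B : A -> Prop) (s1 s2 : list (proc A)) u : In u (parl B s1 s2) -> exists a b, u = Par B a b /\ In a s1 /\ In b s2.
Proof. unfold parl; intros H; apply in_map_iff in H. destruct H as [[a b] [<- H]].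
  apply in_prod_iff in H. exists a, b; simpl; tauto. Qed.

Lemma Om_coupling mu1 mu2 mu1' mu2' S1 S2 S1' S2' om1 om2 :
  FSd mu1 S1 -> FSd mu2 S2 -> FSd mu1' S1' -> FSd mu2' S2' ->
  coupling mu1 mu1' S1 S1' om1 -> coupling mu2 mu2' S2 S2' om2 ->
  coupling (par_dist TT mu1 mu2) (par_dist TT mu1' mu2') (parl TT S1 S2) (parl TT S1' S2') (Om om1 om2).
Proof.
  intros F1 F2 F1' F2' Hc1 Hc2.
  pose proof (FS_par TT _ _ _ _ F1 F2) as FP. pose proof (FS_par TT _ _ _ _ F1' F2') as FP'.
  destruct Hc1 as [N1 [N1' [P1 [Z1 [R1 [Y1 [C1 Y1']]]]]]].
  destruct Hc2 as [N2 [N2' [P2 [Z2 [R2 [Y2 [C2 Y2']]]]]]].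
  split; [apply FP|]. split; [apply FP'|]. split; [|split; [|split; [|split; [|split]]]].
  - intros u v; destruct u, v; simpl; try lra. destruct excluded_middle_informative; [|lra].
    apply Rmult_le_pos; auto.
  - intros u v Hn; destruct u as [| | |B x1 x2]; destruct v as [| | |B' y1 y2]; try reflexivity.
    simpl; destruct excluded_middle_informative as [[-> ->]|]; [|reflexivity].
    destruct (classic (In x1 S1 /\ In y1 S1')) as [H1|H1]; [|rewrite Z1; auto; ring].
    destruct (classic (In x2 S2 /\ In y2 S2')) as [H2|H2]; [|rewrite Z2; auto; ring].
    exfalso; apply Hn; split; apply parl_In; tauto.
  - intros u Hu. apply in_parl in Hu. destruct Hu as [a1 [a2 [-> [Ha1 Ha2]]]].
    unfold parl; rewrite lsum_map, lsum_prod. simpl.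
    rewrite (lsum_ext S1' _ (fun b1 => om1 a1 b1 * lsum S2' (om2 a2))).
    + rewrite lsum_scal_r, R1, R2; auto. destruct excluded_middle_informative as [_|n]; [reflexivity| exfalso; auto].
    + intros b1 _. rewrite <- lsum_scal_l. apply lsum_ext; intros b2 _.
      destruct excluded_middle_informative as [_|n]; [reflexivity| exfalso; tauto].
  - apply FP.
  - intros v Hv. apply in_parl in Hv. destruct Hv as [b1 [b2 [-> [Hb1 Hb2]]]].
    unfold parl; rewrite lsum_map, lsum_prod. simpl.
    rewrite (lsum_ext S1 _ (fun a1 => om1 a1 b1 * lsum S2 (fun a2 => om2 a2 b2))).
    + rewrite lsum_scal_r, C1, C2; auto. destruct excluded_middle_informative as [_|n]; [reflexivity| exfalso; auto].
    + intros a1 _. rewrite <- lsum_scal_l. apply lsum_ext; intros a2 _.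
      destruct excluded_middle_informative as [_|n]; [reflexivity| exfalso; tauto].
  - apply FP'.
Qed.

Lemma par_cost (h : proc A -> proc A -> R) mu1 mu2 mu1' mu2' S1 S2 S1' S2' om1 om2 k1 k2 kk :
  FSd mu1 S1 -> FSd mu2 S2 -> FSd mu1' S1' -> FSd mu2' S2' ->
  coupling mu1 mu1' S1 S1' om1 -> coupling_cost d S1 S1' om1 = k1 ->
  coupling mu2 mu2' S2 S2' om2 -> coupling_cost d S2 S2' om2 = k2 ->
  (forall a1 a2 b1 b2, h (Par TT a1 a2) (Par TT b1 b2) <= 1 - (1 - d a1 b1) * (1 - d a2 b2)) ->
  Kant h (par_dist TT mu1 mu2) (par_dist TT mu1' mu2') kk -> kk <= 1 - (1 - k1) * (1 - k2).
Proof.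
  intros F1 F2 F1' F2' Hc1 Hk1 Hc2 Hk2 Hh [_ Hmin].
  pose proof (Om_coupling _ _ _ _ _ _ _ _ _ _ F1 F2 F1' F2' Hc1 Hc2) as Hc.
  eapply Rle_trans; [apply Hmin; exact Hc|].
  assert (E : coupling_cost h (parl TT S1 S2) (parl TT S1' S2') (Om om1 om2) =
    L4 S1 S2 S1' S2' (fun a1 a2 b1 b2 => h (Par TT a1 a2) (Par TT b1 b2) * (om1 a1 b1 * om2 a2 b2))).
  { unfold coupling_cost, L4, parl. rewrite lsum_map, lsum_prod. apply lsum_ext; intros a1 _.
    apply lsum_ext; intros a2 _. cbn [fst snd]. rewrite lsum_map, lsum_prod. apply lsum_ext; intros b1 _.
    apply lsum_ext; intros b2 _. cbn [fst snd]. rewrite Om_Par; reflexivity. }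
  rewrite E. clear E.
  eapply Rle_trans.
  { apply (L4_le S1 S2 S1' S2' _ (fun a1 a2 b1 b2 =>
      om1 a1 b1 * om2 a2 b2 - ((1 - d a1 b1) * om1 a1 b1) * ((1 - d a2 b2) * om2 a2 b2))).
    intros a1 a2 b1 b2 _ _ _ _. specialize (Hh a1 a2 b1 b2).
    assert (0 <= om1 a1 b1 * om2 a2 b2) by (apply Rmult_le_pos; [apply Hc1|apply Hc2]).
    assert (h (Par TT a1 a2) (Par TT b1 b2) * (om1 a1 b1 * om2 a2 b2) <=
            (1 - (1 - d a1 b1) * (1 - d a2 b2)) * (om1 a1 b1 * om2 a2 b2)) by (apply Rmult_le_compat_r; auto).
    nra. }
  rewrite L4_minus.
  rewrite (L4_fact S1 S2 S1' S2' om1 om2).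
  rewrite (L4_fact S1 S2 S1' S2' (fun a b => (1 - d a b) * om1 a b) (fun a b => (1 - d a b) * om2 a b)).
  assert (M1 : lsum S1 (fun a1 => lsum S1' (om1 a1)) = 1) by exact (coupling_mass _ _ _ _ _ _ _ F1 F1' Hc1).
  assert (M2 : lsum S2 (fun a1 => lsum S2' (om2 a1)) = 1) by exact (coupling_mass _ _ _ _ _ _ _ F2 F2' Hc2).
  assert (K1 : lsum S1 (fun a1 => lsum S1' (fun b => (1 - d a1 b) * om1 a1 b)) = 1 - k1).
  { transitivity (lsum S1 (fun a1 => lsum S1' (om1 a1)) - coupling_cost d S1 S1' om1); [|rewrite M1, Hk1; reflexivity].
    unfold coupling_cost. rewrite <- lsum_minus. apply lsum_ext; intros.
    rewrite <- lsum_minus. apply lsum_ext; intros. ring. }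
  assert (K2 : lsum S2 (fun a1 => lsum S2' (fun b => (1 - d a1 b) * om2 a1 b)) = 1 - k2).
  { transitivity (lsum S2 (fun a1 => lsum S2' (om2 a1)) - coupling_cost d S2 S2' om2); [|rewrite M2, Hk2; reflexivity].
    unfold coupling_cost. rewrite <- lsum_minus. apply lsum_ext; intros.
    rewrite <- lsum_minus. apply lsum_ext; intros. ring. }
  rewrite M1, M2, K1, K2. right; ring.
Qed.

End Par.

Section ParB.
Context {A : Type}.
Variable d : proc A -> proc A -> R.
Hypothesis Hd : is_bisim_metric d.

Definition Gpar (u v : proc A) : R :=
  match u, v with
  | Par B x1 x2, Par B' y1 y2 =>
      if excluded_middle_informative (B = TT /\ B' = TT) then 1 - (1 - d x1 y1) * (1 - d x2 y2) else 1
  | _, _ => 1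
  end.
Definition gpar u v := Rmin (d u v) (Gpar u v).

Lemma Gpar_bnd u v : 0 <= Gpar u v <= 1.
Proof. destruct u as [| | |B x1 x2]; destruct v as [| | |B' y1 y2]; simpl; try lra.
  destruct excluded_middle_informative; [|lra].
  pose proof (d_bnd d Hd x1 y1); pose proof (d_bnd d Hd x2 y2). nra. Qed.

Lemma gpar_bnd : bounded01 gpar.
Proof. intros u v; unfold gpar. pose proof (Gpar_bnd u v); pose proof (d_bnd d Hd u v).
  unfold Rmin; destruct Rle_dec; lra. Qed.

Lemma gpar_le_d u v : gpar u v <= d u v. Proof. apply Rmin_l. Qed.

Lemma Gpar_Par a1 a2 b1 b2 : Gpar (Par TT a1 a2) (Par TT b1 b2) = 1 - (1 - d a1 b1) * (1 - d a2 b2).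
Proof. simpl. destruct excluded_middle_informative as [_|n]; [reflexivity| exfalso; auto]. Qed.

Lemma gpar_Par a1 a2 b1 b2 : gpar (Par TT a1 a2) (Par TT b1 b2) <= 1 - (1 - d a1 b1) * (1 - d a2 b2).
Proof. unfold gpar; rewrite <- Gpar_Par; apply Rmin_r. Qed.

Lemma par_core x1 x2 y1 y2 (a : A) c : d x1 y1 < 1 -> d x2 y2 < 1 ->
  Oset gpar (der (Par TT x1 x2) a) (der (Par TT y1 y2) a) c ->
  c <= 1 - (1 - d x1 y1) * (1 - d x2 y2).
Proof.
  intros H1 H2 [pi [Hs Hinf]]. apply step_ParT in Hs. destruct Hs as [mu1 [mu2 [-> [Hs1 Hs2]]]].
  pose proof (d_bnd d Hd x1 y1) as B1. pose proof (d_bnd d Hd x2 y2) as B2.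
  assert (key : forall eps, 0 < eps -> eps <= 1 - d x1 y1 -> eps <= 1 - d x2 y2 ->
            c <= 1 - (1 - d x1 y1) * (1 - d x2 y2) + 2 * eps).
  { intros eps He E1 E2.
    destruct (match_step d Hd x1 y1 a mu1 eps H1 Hs1 He) as [mu1' [k1 [Hs1' [Hk1 Hlt1]]]].
    destruct (match_step d Hd x2 y2 a mu2 eps H2 Hs2 He) as [mu2' [k2 [Hs2' [Hk2 Hlt2]]]].
    destruct (step_FS _ _ _ Hs1) as [S1 F1]. destruct (step_FS _ _ _ Hs2) as [S2 F2].
    destruct (step_FS _ _ _ Hs1') as [S1' F1']. destruct (step_FS _ _ _ Hs2') as [S2' F2'].
    pose proof (Kant_bounds d mu1 mu1' S1 S1' k1 (d_bnd d Hd) F1 F1' Hk1) as KB1.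
    pose proof (Kant_bounds d mu2 mu2' S2 S2' k2 (d_bnd d Hd) F2 F2' Hk2) as KB2.
    destruct Hk1 as [[s1 [s1' [om1 [Hc1 Hcost1]]]] _].
    destruct (coupling_restrict _ _ _ _ _ _ _ F1 F1' Hc1) as [Hc1' Hr1].
    destruct Hk2 as [[s2 [s2' [om2 [Hc2 Hcost2]]]] _].
    destruct (coupling_restrict _ _ _ _ _ _ _ F2 F2' Hc2) as [Hc2' Hr2].
    destruct (Kant_exists gpar (par_dist TT mu1 mu2) (par_dist TT mu1' mu2') _ _
                (FS_par TT _ _ _ _ F1 F2) (FS_par TT _ _ _ _ F1' F2')) as [kk Hkk].
    assert (Hc : c <= kk).
    { apply (inf_lb _ _ _ Hinf). exists (par_dist TT mu1' mu2'); split; auto.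
      unfold der; apply st_sync; auto; exact I. }
    assert (Hkk' : kk <= 1 - (1 - k1) * (1 - k2)).
    { apply (par_cost d gpar mu1 mu2 mu1' mu2' S1 S2 S1' S2' om1 om2 k1 k2 kk F1 F2 F1' F2' Hc1');
        auto; [rewrite <- Hr1; auto| rewrite <- Hr2; auto| apply gpar_Par]. }
    assert (Ha : 1 - d x1 y1 - eps <= 1 - k1) by lra.
    assert (Hb : 1 - d x2 y2 - eps <= 1 - k2) by lra.
    assert (Hp : (1 - d x1 y1 - eps) * (1 - d x2 y2 - eps) <= (1 - k1) * (1 - k2)).
    { apply Rmult_le_compat; lra. }
    nra. }
  destruct (Rle_dec c (1 - (1 - d x1 y1) * (1 - d x2 y2))) as [Hle|Hgt]; auto. exfalso.
  set (eps := Rmin (Rmin (1 - d x1 y1) (1 - d x2 y2)) ((c - (1 - (1 - d x1 y1) * (1 - d x2 y2))) / 4)).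
  assert (E1 : eps <= 1 - d x1 y1) by (unfold eps; eapply Rle_trans; [apply Rmin_l| apply Rmin_l]).
  assert (E2 : eps <= 1 - d x2 y2) by (unfold eps; eapply Rle_trans; [apply Rmin_l| apply Rmin_r]).
  assert (E3 : eps <= (c - (1 - (1 - d x1 y1) * (1 - d x2 y2))) / 4) by (unfold eps; apply Rmin_r).
  assert (E0 : 0 < eps).
  { unfold eps. apply Rmin_glb_lt; [apply Rmin_glb_lt|]; lra. }
  specialize (key eps E0 E1 E2). lra.
Qed.

Lemma gpar_prefix : prefix gpar.
Proof.
  split; [apply gpar_bnd|]. intros u v w Hw.
  pose proof (Bfun_bounds gpar u v w gpar_bnd Hw) as Bw.
  unfold gpar. apply Rmin_glb.
  - exact (Bfun_mono gpar d u v w (d u v) gpar_bnd (d_bnd d Hd) gpar_le_d Hw (d_fix d Hd u v)).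
  - destruct u as [| | |B x1 x2]; destruct v as [| | |B' y1 y2]; simpl Gpar; try lra.
    destruct excluded_middle_informative as [[-> ->]|]; [|lra].
    pose proof (d_bnd d Hd x1 y1) as B1. pose proof (d_bnd d Hd x2 y2) as B2.
    destruct (Rlt_dec (d x1 y1) 1) as [L1|L1]; [|assert (d x1 y1 = 1) by lra; nra].
    destruct (Rlt_dec (d x2 y2) 1) as [L2|L2]; [|assert (d x2 y2 = 1) by lra; nra].
    apply (sup_le _ _ _ Hw); [|nra].
    intros c [a Ha]. apply Haus_iff in Ha. destruct Ha as [v1 [v2 [Hv1 [Hv2 ->]]]].
    apply Rmax_lub.
    + apply (sup_le _ _ _ Hv1); [|nra]. intros c' Hc'. apply (par_core x1 x2 y1 y2 a); auto.
    + apply (sup_le _ _ _ Hv2); [|nra]. intros c' Hc'.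
      rewrite (d_sym d Hd x1 y1), (d_sym d Hd x2 y2).
      apply (par_core y1 y2 x1 x2 a); auto; rewrite (d_sym d Hd); auto.
Qed.

Lemma par_bound p1 p2 q1 q2 :
  d (Par TT p1 p2) (Par TT q1 q2) <= 1 - (1 - d p1 q1) * (1 - d p2 q2).
Proof.
  eapply Rle_trans; [apply (park d Hd gpar gpar_prefix)|].
  unfold gpar; rewrite <- Gpar_Par; apply Rmin_r.
Qed.

End ParB.

Lemma prod_one n f : (forall y, (y < n)%nat -> f y = 1) -> prod_upto n f = 1.
Proof. induction n as [|n IH]; intros H; simpl; auto. rewrite IH; [rewrite H; [ring|lia]| intros; apply H; lia]. Qed.

Lemma prod_mult n f g : prod_upto n (fun y => f y * g y) = prod_upto n f * prod_upto n g.
Proof. induction n as [|n IH]; simpl; [ring|]. rewrite IH; ring. Qed.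

Lemma prod_ext n f g : (forall y, f y = g y) -> prod_upto n f = prod_upto n g.
Proof. induction n as [|n IH]; intros H; simpl; auto. rewrite IH, H; auto. Qed.

Lemma prod_nonneg n f : (forall y, 0 <= f y) -> 0 <= prod_upto n f.
Proof. induction n as [|n IH]; intros H; simpl; [lra|]. apply Rmult_le_pos; auto. Qed.

Lemma prod_extend n n' f : (forall y, (n <= y)%nat -> f y = 1) -> (n <= n')%nat ->
  prod_upto n' f = prod_upto n f.
Proof. intros H; induction 1; auto. simpl. rewrite IHle, H; [ring| lia]. Qed.

Lemma mult_vbound {A : Type} (t : dterm A) y : (vbound t <= y)%nat -> mult t y = 0%nat.
Proof. induction t as [x| |a t IH|t1 IH1 t2 IH2]; simpl; intros H; auto.
  - destruct (Nat.eqb_spec x y); [lia|auto].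
  - rewrite IH1, IH2; lia. Qed.

Theorem proposition2 (A : Type)
  (HA : exists f : A -> nat, forall a b, f a = f b -> a = b)
  (d : proc A -> proc A -> R) (Hd : is_bisim_metric d)
  (t : dterm A) (sigma1 sigma2 : nat -> proc A)
  (Hs : forall x : nat, d (sigma1 x) (sigma2 x) < 1) :
  d (dsubst sigma1 t) (dsubst sigma2 t)
    <= dda (mult t) (vbound t) (fun x => d (sigma1 x) (sigma2 x)).
Proof.
  set (e := fun x => d (sigma1 x) (sigma2 x)).
  assert (Hc : forall y, 0 <= 1 - e y) by (intros y; unfold e; pose proof (Hs y); lra).
  induction t as [x| |a t IH|t1 IH1 t2 IH2].
  - unfold dda; simpl. rewrite prod_one.
    + rewrite Nat.eqb_refl. simpl. unfold e. lra.
    + intros y Hy. destruct (Nat.eqb_spec x y); [lia| reflexivity].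
  - unfold dda; simpl. pose proof (nil_bound d Hd). lra.
  - cbn [dsubst mult vbound]. eapply Rle_trans; [apply (pref_bound d Hd)|]. exact IH.
  - cbn [dsubst mult vbound]. eapply Rle_trans; [apply (par_bound d Hd)|].
    unfold dda in *.
    set (n := Nat.max (vbound t1) (vbound t2)).
    rewrite (prod_ext n _ (fun y => (1 - e y) ^ mult t1 y * (1 - e y) ^ mult t2 y))
      by (intros; apply pow_add).
    rewrite prod_mult.
    rewrite (prod_extend (vbound t1) n (fun y => (1 - e y) ^ mult t1 y));
      [| intros y Hy; rewrite mult_vbound; [reflexivity| lia] | unfold n; lia].
    rewrite (prod_extend (vbound t2) n (fun y => (1 - e y) ^ mult t2 y));
      [| intros y Hy; rewrite mult_vbound; [reflexivity| lia] | unfold n; lia].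
    set (P1 := prod_upto (vbound t1) (fun y => (1 - e y) ^ mult t1 y)) in *.
    set (P2 := prod_upto (vbound t2) (fun y => (1 - e y) ^ mult t2 y)) in *.
    assert (0 <= P1) by (apply prod_nonneg; intros; apply pow_le; auto).
    assert (0 <= P2) by (apply prod_nonneg; intros; apply pow_le; auto).
    fold e in IH1, IH2.
    assert (P1 <= 1 - d (dsubst sigma1 t1) (dsubst sigma2 t1)) by lra.
    assert (P2 <= 1 - d (dsubst sigma1 t2) (dsubst sigma2 t2)) by lra.
    assert (P1 * P2 <= (1 - d (dsubst sigma1 t1) (dsubst sigma2 t1)) * (1 - d (dsubst sigma1 t2) (dsubst sigma2 t2)))
      by (apply Rmult_le_compat; auto).
    lra.
Qed.
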